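(* For all $r,s\ge1$, as an identity of polynomials in $q$, $$\sum_C(q-1)^{r+s-l(C)-1}=\sum_{m=0}^{\min(r-1,s-1)}\binom{r-1}{m}\binom{s-1}{m}q^{r+s-m-1},$$ where the sum runs over all cells $C$ for $(r,s)$, including the empty cell.
   Context: A cell (for given $r,s$) is a finite (possibly empty) sequence of distinct pairs $(i_1,j_1),\dots,(i_l,j_l)$ with $1\le i_k\le r$, $1\le j_k\le s$, $i_1\le\cdots\le i_l$ and $j_1\le\cdots\le j_l$; $l(C)=l$ is its length. *)

(* Defs.v *)
From HB Require Import structures.
From mathcomp Require Import all_boot all_order all_algebra.
Set Implicit Arguments. Unset Strict Implicit. Unset Printing Implicit Defensive.
Import GRing.Theory.

Definition is_cell (r s : nat) (C : seq (nat * nat)) : bool :=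
  [&& uniq C,
      all (fun p => (1 <= p.1 <= r) && (1 <= p.2 <= s)) C,
      sorted (fun a b : nat * nat => a.1 <= b.1) C &
      sorted (fun a b : nat * nat => a.2 <= b.2) C].

Fixpoint words (xs : seq (nat * nat)) (l : nat) : seq (seq (nat * nat)) :=
  if l is l'.+1 then [seq x :: w | x <- xs, w <- words xs l'] else [:: [::]].

Definition all_pairs (r s : nat) : seq (nat * nat) :=
  [seq (i, j) | i <- iota 1 r, j <- iota 1 s].

(* The list of all cells for (r,s) (each exactly once): a cell consists of
   distinct pairs from [1,r]x[1,s], so its length is at most r*s. *)
Definition cells (r s : nat) : seq (seq (nat * nat)) :=
  [seq C <- flatten [seq words (all_pairs r s) l | l <- iota 0 (r * s).+1]
     | is_cell r s C].

(* Main.v *)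
Require Import Defs.
From HB Require Import structures.
From mathcomp Require Import all_boot all_order all_algebra.
From mathcomp Require Import zify ring.
Import GRing.Theory.
Set Implicit Arguments. Unset Strict Implicit. Unset Printing Implicit Defensive.

Definition le2 : rel (nat * nat) := [rel a b | (a.1 <= b.1) && (a.2 <= b.2)].

Lemma le2_trans : transitive le2.
Proof. move=> y x z /andP[h1 h2] /andP[h3 h4]; apply/andP; split; lia. Qed.
Lemma le2_refl : reflexive le2.
Proof. by move=> x; rewrite /le2 /= !leqnn. Qed.

Lemma cell_sorted R S C : is_cell R S C -> sorted le2 C.
Proof. by case/and4P=> _ _ h1 h2; rewrite /le2 sorted_relI h1 h2. Qed.

Lemma cell_cmp R S C x y : is_cell R S C -> x \in C -> y \in C ->
  le2 x y || le2 y x.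
Proof.
move=> /cell_sorted hs hx hy.
have := sorted_leq_nth le2_trans le2_refl x hs.
move=> H.
have ix : index x C < size C by rewrite index_mem.
have iy : index y C < size C by rewrite index_mem.
case: (leqP (index x C) (index y C)) => hi.
  by have := H _ _ ix iy hi; rewrite !nth_index // => ->.
by have := H _ _ iy ix (ltnW hi); rewrite !nth_index // => ->; rewrite orbT.
Qed.

Lemma cell_all R S C p : is_cell R S C -> p \in C ->
  (1 <= p.1 <= R) && (1 <= p.2 <= S).
Proof. by case/and4P=> _ /allP h _ _ /h. Qed.

Lemma cell_size R S C : is_cell R S C -> size C <= R + S - 1.
Proof.
move=> hc.
have inj : {in C &, injective (fun p : nat * nat => p.1 + p.2)}.
  move=> [a b] [c d] h1 h2 /= e.
  have := cell_cmp hc h1 h2; rewrite /le2 /= => h.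
  have [e1 e2] : a = c /\ b = d by case/orP: h => /andP[]; lia.
  by rewrite e1 e2.
rewrite -(size_map (fun p : nat * nat => p.1 + p.2)).
rewrite -(size_iota 2 (R + S - 1)).
apply: uniq_leq_size; first by rewrite map_inj_in_uniq //; case/and4P: hc.
move=> k /mapP [p hp ->]; rewrite mem_iota.
have := cell_all hc hp; case: p hp => a b /= _; lia.
Qed.

Lemma mem_words (xs : seq (nat * nat)) l w :
  (w \in words xs l) = (size w == l) && all (mem xs) w.
Proof.
elim: l w => [|l IH] w; first by case: w => [|x w] //=; rewrite in_cons in_nil.
apply/allpairsP/idP.
  case=> [[a b] [ha hb ->]] /=; rewrite eqSS ha /=.
  by move: hb; rewrite IH.
case: w => [|x w] //= /andP[hs /andP[hx ha]].
by exists (x, w); rewrite /= hx IH -(eqSS (size w)) hs ha.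
Qed.

Lemma uniq_words (xs : seq (nat * nat)) l : uniq xs -> uniq (words xs l).
Proof.
move=> ux; elim: l => [|l IH] //=.
apply: allpairs_uniq => //.
by move=> [a b] [c d] _ _ /= [-> ->].
Qed.

Lemma mem_all_pairs r s p : (p \in all_pairs r s) = (1 <= p.1 <= r) && (1 <= p.2 <= s).
Proof.
case: p => i j; apply/allpairsP/idP => [[[a b] [ha hb [-> ->]]]|h].
  by move: ha hb; rewrite /= !mem_iota; lia.
exists (i, j); rewrite /= !mem_iota; move: h => /= h; split => //; lia.
Qed.

Lemma uniq_all_pairs r s : uniq (all_pairs r s).
Proof.
apply: allpairs_uniq; rewrite ?iota_uniq //.
by move=> [a b] [c d] _ _ /= [-> ->].
Qed.

Lemma uniq_flat xs n m :
  uniq xs -> uniq (flatten [seq words xs l | l <- iota m n]).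
Proof.
move=> ux; elim: n m => [|n IH] m //=.
rewrite cat_uniq uniq_words // IH andbT.
apply/hasPn => w /flattenP [ws /mapP [l hl ->]] hw.
move: hl; rewrite mem_iota => hl.
rewrite mem_words in hw; rewrite mem_words; move/andP: hw => [/eqP hw _].
apply/negP => /andP[/eqP e _]; lia.
Qed.

Lemma uniq_cells r s : uniq (cells r s).
Proof. by rewrite filter_uniq // uniq_flat // uniq_all_pairs. Qed.

Lemma mem_cells r s C : (C \in cells r s) = is_cell r s C.
Proof.
rewrite mem_filter; apply/andP/idP => [[]//|hc]; split => //.
apply/flattenP; exists (words (all_pairs r s) (size C)).
  apply/mapP; exists (size C) => //; rewrite mem_iota /= add0n ltnS.
  have := size_allpairs pair (iota 1 r) (iota 1 s); rewrite !size_iota => <-.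
  apply: (@uniq_leq_size _ C (all_pairs r s)); first by case/and4P: hc.
  by move=> p hp; rewrite mem_all_pairs; apply: cell_all hc hp.
rewrite mem_words eqxx /=; apply/allP => p hp.
by have := cell_all hc hp; rewrite -mem_all_pairs.
Qed.



Lemma sorted_rconsE (T : Type) (e : rel T) : transitive e -> forall c y,
  sorted e (rcons c y) = sorted e c && all (fun z => e z y) c.
Proof.
move=> tr c y; rewrite !sorted_pairwise // -cats1 pairwise_cat allrel1r /=.
by rewrite andbT andbC.
Qed.

Lemma tr1 : transitive (fun a b : nat * nat => a.1 <= b.1).
Proof. by move=> ? ? ? /leq_trans h /h. Qed.
Lemma tr2 : transitive (fun a b : nat * nat => a.2 <= b.2).
Proof. by move=> ? ? ? /leq_trans h /h. Qed.

Definition ra r (C : seq (nat * nat)) := all (fun p => p.1 <= r) C.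
Definition rb s (C : seq (nat * nat)) := all (fun p => p.2 <= s) C.

Lemma cell_gen r s r' s' C (P : nat * nat -> bool) :
  (forall i j, (1 <= i <= r') && (1 <= j <= s') = (1 <= i <= r) && (1 <= j <= s) && P (i, j)) ->
  is_cell r' s' C = is_cell r s C && all P C.
Proof.
move=> h; rewrite /is_cell.
have -> : all (fun p : nat * nat => (1 <= p.1 <= r') && (1 <= p.2 <= s')) C =
   all (fun p : nat * nat => (1 <= p.1 <= r) && (1 <= p.2 <= s)) C && all P C.
  by rewrite -all_predI; apply: eq_all => -[i j] /=; rewrite h.
by case: (uniq C); case: (all _ C); case: (all P C); case: (sorted _ C); case: (sorted _ C).
Qed.

Lemma cellA r s C : is_cell r s.+1 C = is_cell r.+1 s.+1 C && ra r C.
Proof. by apply: cell_gen => i j /=; lia. Qed.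
Lemma cellB r s C : is_cell r.+1 s C = is_cell r.+1 s.+1 C && rb s C.
Proof. by apply: cell_gen => i j /=; lia. Qed.
Lemma cellAB r s C : is_cell r s C = is_cell r.+1 s.+1 C && (ra r C && rb s C).
Proof.
by rewrite /ra /rb -all_predI; apply: cell_gen => i j /=; lia.
Qed.

Lemma corner_in r s C : is_cell r.+1 s.+1 C ->
  ((r.+1, s.+1) \in C) = ~~ (ra r C || rb s C).
Proof.
move=> hc; apply/idP/idP.
  move=> hin; rewrite negb_or; apply/andP; split; apply/negP => /allP h;
  by have := h _ hin; rewrite /= ltnn.
rewrite negb_or => /andP[/allPn [p hp /= hp1] /allPn [q hq /= hq2]].
have := cell_all hc hp; have := cell_all hc hq; have := cell_cmp hc hp hq.
rewrite /le2 /=.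
case: p hp hp1 => i j /= hp hp1; case: q hq hq2 => k l /= hq hq2 h h1 h2.
case/orP: h => /andP[e1 e2].
  by have -> : (r.+1, s.+1) = (k, l) by congr pair; lia.
by have -> : (r.+1, s.+1) = (i, j) by congr pair; lia.
Qed.

Lemma cell_rcons r s c : is_cell r.+1 s.+1 c -> ra r c || rb s c ->
  is_cell r.+1 s.+1 (rcons c (r.+1, s.+1)).
Proof.
move=> hc hab.
have hn : (r.+1, s.+1) \notin c by rewrite corner_in // hab.
move: (hc); rewrite /is_cell => /and4P[u al s1 s2].
rewrite rcons_uniq hn u all_rcons al /= !leqnn /=.
rewrite (sorted_rconsE tr1) (sorted_rconsE tr2) s1 s2 /=.
by apply/andP; split; apply/allP => p hp; have := cell_all hc hp; case: p {hp} => i j /=; lia.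
Qed.

Lemma cell_split r s C : is_cell r.+1 s.+1 C -> (r.+1, s.+1) \in C ->
  exists2 c, C = rcons c (r.+1, s.+1) & is_cell r.+1 s.+1 c.
Proof.
case/lastP: C => [//|c y] hc hin.
have hy := cell_all hc (_ : y \in rcons c y); rewrite ?mem_rcons ?mem_head in hy; move: {hy}(hy isT) => hy.
move: (hc); rewrite /is_cell => /and4P[u al s1 s2].
move: u al s1 s2; rewrite rcons_uniq all_rcons (sorted_rconsE tr1) (sorted_rconsE tr2).
move=> /andP[yn u] /andP[_ al] /andP[s1 a1] /andP[s2 a2].
have ey : y = (r.+1, s.+1).
  move: hin; rewrite mem_rcons in_cons => /orP[/eqP -> //|hin].
  have := allP a1 _ hin; have := allP a2 _ hin.
  by case: y hy {yn hc a1 a2} => i j /= hy h1 h2; congr pair; lia.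
by exists c; rewrite ?ey // /is_cell u al s1 s2.
Qed.


Local Open Scope ring_scope.

Definition W r s (C : seq (nat * nat)) : {poly int} := ('X - 1) ^+ (r + s - size C - 1).
Definition T r s := \sum_(C <- cells r s) W r s C.

Lemma sum_pred (Q : pred (seq (nat * nat))) r s r' s' (F : seq (nat * nat) -> {poly int}) :
  (forall C, is_cell r' s' C = is_cell r s C && Q C) ->
  \sum_(C <- cells r s | Q C) F C = \sum_(C <- cells r' s') F C.
Proof.
move=> h; rewrite -big_filter; apply: perm_big; apply: uniq_perm.
- by rewrite filter_uniq // uniq_cells.
- exact: uniq_cells.
by move=> C; rewrite mem_filter !mem_cells h andbC.
Qed.

Lemma incl_excl (L : seq (seq (nat * nat))) (a b : pred (seq (nat * nat))) (F : seq (nat * nat) -> {poly int}) :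
  \sum_(C <- L | a C || b C) F C =
  \sum_(C <- L | a C) F C + \sum_(C <- L | b C) F C - \sum_(C <- L | a C && b C) F C.
Proof.
rewrite (bigID a) /= [X in _ = _ + X - _](bigID a) /=.
have e1 : \sum_(i <- L | (a i || b i) && a i) F i = \sum_(C <- L | a C) F C.
  by apply: eq_bigl => x /=; case: (a x); case: (b x).
have e2 : \sum_(i <- L | (a i || b i) && ~~ a i) F i = \sum_(i <- L | b i && ~~ a i) F i.
  by apply: eq_bigl => x /=; case: (a x); case: (b x).
have e3 : \sum_(i <- L | b i && a i) F i = \sum_(C <- L | a C && b C) F C.
  by apply: eq_bigl => x /=; rewrite andbC.
rewrite e1 e2 e3; ring.
Qed.

Lemma corner_sum r s (F : seq (nat * nat) -> {poly int}) :
  \sum_(C <- cells r.+1 s.+1 | ~~ (ra r C || rb s C)) F C =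
  \sum_(c <- cells r.+1 s.+1 | ra r c || rb s c) F (rcons c (r.+1, s.+1)).
Proof.
rewrite -big_filter -[RHS]big_filter -(big_map (rcons^~ (r.+1, s.+1)) xpredT F).
apply: perm_big; apply: uniq_perm.
- by rewrite filter_uniq // uniq_cells.
- rewrite map_inj_uniq; first by rewrite filter_uniq // uniq_cells.
  by move=> x y; apply: rcons_injl.
move=> C; rewrite mem_filter mem_cells; apply/idP/mapP.
  case/andP=> hP hc.
  have hin : (r.+1, s.+1) \in C by rewrite corner_in.
  case: (cell_split hc hin) => c ec hc'; exists c => //.
  rewrite mem_filter mem_cells hc' andbT.
  move: hc; rewrite ec /is_cell rcons_uniq => /and4P[/andP[hn _] _ _ _].
  by move: hn; rewrite corner_in // negbK.
case=> c; rewrite mem_filter mem_cells => /andP[hP hc] ->.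
have hc2 := cell_rcons hc hP.
by rewrite hc2 andbT -corner_in // mem_rcons mem_head.
Qed.

Lemma Trec r s : (0 < r + s)%N ->
  T r.+1 s.+1 = 'X * T r s.+1 + 'X * T r.+1 s - 'X * ('X - 1) * T r s.
Proof.
move=> hrs; rewrite /T (bigID (fun C => ra r C || rb s C)) /=.
rewrite corner_sum -big_split /=.
rewrite big_seq_cond.
rewrite (eq_bigr (fun C => 'X * ('X - 1) ^+ (r + s - size C))); last first.
  move=> C /andP[hC hP]; rewrite mem_cells in hC.
  have hl : (size C <= r + s)%N.
    case/orP: hP => h.
      have hc' : is_cell r s.+1 C by rewrite cellA hC h.
      by have := cell_size hc'; rewrite addnS subSS subn0.
    have hc' : is_cell r.+1 s C by rewrite cellB hC h.
    by have := cell_size hc'; rewrite addSn subSS subn0.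
  rewrite /W size_rcons.
  have -> : (r.+1 + s.+1 - size C - 1 = (r + s - size C).+1)%N by lia.
  have -> : (r.+1 + s.+1 - (size C).+1 - 1 = r + s - size C)%N by lia.
  by rewrite exprS; ring.
rewrite -big_seq_cond incl_excl.
rewrite (sum_pred _ (cellA r s)) (sum_pred _ (cellB r s)).
rewrite (sum_pred _ (cellAB r s)).
rewrite /T /W -!mulrA !big_distrr /=.
congr (_ + _ - _).
- by apply: eq_bigr => C _; rewrite subnAC addnS subSS subn0.
- by apply: eq_bigr => C _; rewrite subnAC addSn subSS subn0.
rewrite big_seq [RHS]big_seq; apply: eq_bigr => C; rewrite mem_cells => hC.
have hl := cell_size hC.
have hl' : (size C < r + s)%N.
  by apply: leq_ltn_trans hl _; rewrite ltn_subrL hrs.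
by rewrite -exprS subn1 prednK // subn_gt0.
Qed.

Lemma cells_empty r s : (r = 0 \/ s = 0)%N -> perm_eq (cells r s) [:: [::]].
Proof.
move=> h; apply: uniq_perm; rewrite ?uniq_cells // => -[|p c].
  by rewrite mem_cells mem_head.
rewrite mem_cells in_cons in_nil /=; apply/negP => hc.
have := cell_all hc (mem_head p c); case: p {hc} => i j /=; lia.
Qed.

Lemma T0 s : T 0 s = ('X - 1) ^+ (s - 1).
Proof. by rewrite /T (perm_big _ (@cells_empty 0 s (or_introl erefl))) big_seq1 /W add0n subn0. Qed.

Lemma Tr0 r : T r 0 = ('X - 1) ^+ (r - 1).
Proof. by rewrite /T (perm_big _ (@cells_empty r 0 (or_intror erefl))) big_seq1 /W addn0 subn0. Qed.

Lemma cells11 : cells 1 1 = [:: [::]; [:: (1, 1)%N]].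
Proof. by vm_compute. Qed.

Lemma T11 : T 1 1 = 'X.
Proof. by rewrite /T cells11 !big_cons big_nil /W /= expr1 expr0 addr0 subrK. Qed.

Lemma T1s s : T 1 s.+1 = 'X ^+ s.+1.
Proof.
elim: s => [|s IH]; first by rewrite T11 expr1.
rewrite Trec // IH !T0 !subn1 /= !exprS; ring.
Qed.

Lemma Tr1 r : T r.+1 1 = 'X ^+ r.+1.
Proof.
elim: r => [|r IH]; first by rewrite T11 expr1.
rewrite Trec ?addn0 // IH !Tr0 !subn1 /= !exprS; ring.
Qed.


Local Open Scope ring_scope.

Definition tm a b m : {poly int} := ('C(a, m) * 'C(b, m))%:R * 'X ^+ (a + b + 1 - m).
Definition S n a b := \sum_(m < n) tm a b m.

Lemma S_widen n a b : (minn a b < n)%N -> S n a b = S (minn a b).+1 a b.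
Proof.
elim: n => [//|n IH] h.
case: (ltnP (minn a b) n) => h2; last by have -> : n = minn a b by lia.
rewrite /S big_ord_recr /= -/(S n a b) IH //.
have [h1|h1] : (a < n \/ b < n)%N by lia.
  by rewrite /tm bin_small // mul0n mul0r addr0.
by rewrite /tm (bin_small h1) muln0 mul0r addr0.
Qed.

Lemma tm0 a b : tm a.+1 b.+1 0 = 'X * tm a b.+1 0 + 'X * tm a.+1 b 0 - 'X ^+ 2 * tm a b 0.
Proof.
rewrite /tm !bin0 !subn0 muln1.
have -> : (a.+1 + b.+1 + 1 = (a + b + 1).+2)%N by lia.
have -> : (a + b.+1 + 1 = (a + b + 1).+1)%N by lia.
have -> : (a.+1 + b + 1 = (a + b + 1).+1)%N by lia.
rewrite !exprS; ring.
Qed.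

Lemma tmS a b m : tm a.+1 b.+1 m.+1 =
  'X * tm a b.+1 m.+1 + 'X * tm a.+1 b m.+1 + 'X * tm a b m - 'X ^+ 2 * tm a b m.+1.
Proof.
rewrite /tm; case: (leqP m.+1 (a + b + 1)) => hk.
  set e := (a + b + 1 - m.+1)%N.
  have -> : (a.+1 + b.+1 + 1 - m.+1 = e.+2)%N by rewrite /e; lia.
  have -> : (a + b.+1 + 1 - m.+1 = e.+1)%N by rewrite /e; lia.
  have -> : (a.+1 + b + 1 - m.+1 = e.+1)%N by rewrite /e; lia.
  have -> : (a + b + 1 - m = e.+1)%N by rewrite /e; lia.
  rewrite !binS !natrM !natrD !exprS; ring.
rewrite (@bin_small a.+1 m.+1) ?(@bin_small a m.+1) ?(@bin_small a m); try lia.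
rewrite !mul0n !mul0r !mulr0; ring.
Qed.

Lemma Srec n a b : (a + b + 3 <= n)%N ->
  S n a.+1 b.+1 = 'X * S n a b.+1 + 'X * S n a.+1 b + 'X * S n a b - 'X ^+ 2 * S n a b.
Proof.
case: n => [|n] h; first lia.
rewrite /S [in LHS]big_ord_recl.
rewrite [\sum_(m < n.+1) tm a b.+1 m]big_ord_recl [\sum_(m < n.+1) tm a.+1 b m]big_ord_recl.
rewrite [X in 'X ^+ 2 * X]big_ord_recl big_ord_recr /=.
have -> : tm a b n = 0.
  by rewrite /tm bin_small ?mul0n ?mul0r //; lia.
rewrite (eq_bigr (fun i : 'I_n => 'X * tm a b.+1 i.+1 + 'X * tm a.+1 b i.+1 + 'X * tm a b i - 'X ^+ 2 * tm a b i.+1)); last by move=> i _; rewrite tmS.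
rewrite tm0 !sumrB !big_split /= -!big_distrr /=.
set A := \sum_(i < n) tm a b i.
have eb : forall F : nat -> {poly int}, \sum_(i < n) F (bump 0 i) = \sum_(i < n) F i.+1.
  by move=> F; apply: eq_bigr => i _; rewrite /bump leq0n add1n.
rewrite !eb; ring.
Qed.

Lemma TS a b : T a.+1 b.+1 = S (minn a b).+1 a b.
Proof.
elim: a b => [|a IHa] b.
  rewrite T1s /S min0n big_ord1 /tm /=.
  by rewrite !bin0 mul1n mul1r add0n subn0 addn1.
elim: b => [|b IHb].
  rewrite Tr1 /S minn0 big_ord1 /tm /=.
  by rewrite !bin0 mul1n mul1r addn0 subn0 addn1.
rewrite Trec // IHa IHb IHa.
pose N := (a + b + 5)%N.
rewrite -(@S_widen N a b.+1) ?(@S_widen N a.+1 b) ?(@S_widen N a b) ?(@S_widen N a.+1 b.+1); try lia.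
rewrite -(@S_widen N a.+1 b) -?(@S_widen N a b) -?(@S_widen N a.+1 b.+1); try lia.
rewrite Srec; last lia.
ring.
Qed.

Unset Implicit Arguments.

Theorem mainTheorem15 (r s : nat) (hr : (1 <= r)%N) (hs : (1 <= s)%N) :
  \sum_(C <- cells r s) ('X - 1 : {poly int}) ^+ (r + s - size C - 1)
  = \sum_(m < (minn (r - 1) (s - 1)).+1)
      ('C(r - 1, m) * 'C(s - 1, m))%:R * 'X ^+ (r + s - m - 1).
Proof.
case: r hr => // a _; case: s hs => // b _.
rewrite !subn1 /=.
have := TS a b; rewrite /T /W => ->.
rewrite /S /tm; apply: eq_bigr => m _; congr (_ * _ ^+ _); lia.
Qed.
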